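(* Let $\mathcal{X}$ be a measurable space of inputs and let $P_{\mathrm{ben}}$ and $P_{\mathrm{bd}}$ be two probability distributions on $\mathcal{X}$. Let $x \mapsto S(x) \in \mathbb{R}^{n\times m}$ and $x \mapsto V(x) \in \mathbb{R}^{m\times d_v}$ be measurable maps. For $\lambda \in \mathbb{R}$ define $$R^{\lambda}(x) := \operatorname{softmax}(\lambda S(x))\,V(x) \in \mathbb{R}^{n\times d_v},$$ where the softmax is applied row-wise, so that $R^{1}(x)=\operatorname{softmax}(S(x))V(x)$. Define the scaling-induced response shift $$D(x;\lambda) := \operatorname{MSE}\big(R^{\lambda}(x), R^{1}(x)\big) = \frac{1}{N}\,\big\|R^{\lambda}(x)-R^{1}(x)\big\|_F^2, \qquad N := n\,d_v,$$ and for $c\in\{\mathrm{ben},\mathrm{bd}\}$ the class-wise mean curve $\bar D_c(\lambda) := \mathbb{E}_{x\sim P_c}[D(x;\lambda)]$. Assume there exist $\delta>0$ and measurable functions $M_1, M_2:\mathcal{X}\to[0,\infty)$ such that, for each $c\in\{\mathrm{ben},\mathrm{bd}\}$ and $P_c$-almost every $x$, and for all $\lambda\in(1-\delta,1+\delta)$, $$\Big\|\tfrac{\partial R^{\lambda}(x)}{\partial\lambda}\Big\|_F \le M_1(x), \qquad \Big\|\tfrac{\partial^2 R^{\lambda}(x)}{\partial\lambda^2}\Big\|_F \le M_2(x),$$ and $\mathbb{E}_{x\sim P_c}\big[M_1(x)^2+M_2(x)^2\big]<\infty$ for $c\in\{\mathrm{ben},\mathrm{bd}\}$. Then there exist finite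 constants $\Gamma_{\mathrm{ben}}$ and $\Gamma_{\mathrm{bd}}$ such that for each $c\in\{\mathrm{ben},\mathrm{bd}\}$, $$\bar D_c(\lambda) = \Gamma_c(\lambda-1)^2 + o\big((\lambda-1)^2\big) \qquad \text{as } \lambda\to 1.$$ Moreover, if $\Gamma_{\mathrm{ben}}\neq\Gamma_{\mathrm{bd}}$, then there exists $\epsilon>0$ such that $\bar D_{\mathrm{bd}}(\lambda)\neq \bar D_{\mathrm{ben}}(\lambda)$ for all $\lambda$ with $0<|\lambda-1|<\epsilon$.
   Context: This models a single cross-attention layer at a fixed denoising step of a text-to-image diffusion model: $S(x)$ is the attention score matrix for input prompt $x$, $V(x)$ the value matrix, and $\lambda$ a scaling factor applied to the attention scores. $P_{\mathrm{ben}}$ and $P_{\mathrm{bd}}$ are the benign and backdoor input distributions. The row-wise softmax of a row vector $s\in\mathbb{R}^m$ is $\operatorname{softmax}(s)_j = e^{s_j}/\sum_{k} e^{s_k}$. $\|\cdot\|_F$ is the Frobenius norm. *)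

(* Defs.v *)
From HB Require Import structures.
From mathcomp Require Import all_boot all_order all_algebra.
From mathcomp Require Import all_classical all_reals all_analysis.
Set Implicit Arguments. Unset Strict Implicit. Unset Printing Implicit Defensive.
Import Order.TTheory GRing.Theory Num.Theory.
Import numFieldNormedType.Exports.
Local Open Scope ring_scope.

Definition softmax (R : realType) (n m : nat) (A : 'M[R]_(n, m)) : 'M[R]_(n, m) :=
  \matrix_(i < n, j < m) (expR (A i j) / \sum_(k < m) expR (A i k)).

Definition Rlam (R : realType) (X : Type) (n m dv : nat)
  (S : X -> 'M[R]_(n, m)) (V : X -> 'M[R]_(m, dv)) (l : R) (x : X) : 'M[R]_(n, dv) :=
  softmax (l *: S x) *m V x.

Definition frob2 (R : realType) (p q : nat) (A : 'M[R]_(p, q)) : R :=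
  \sum_(i < p) \sum_(j < q) A i j ^+ 2.
Definition frob (R : realType) (p q : nat) (A : 'M[R]_(p, q)) : R :=
  Num.sqrt (frob2 A).

Definition Dshift (R : realType) (X : Type) (n m dv : nat)
  (S : X -> 'M[R]_(n, m)) (V : X -> 'M[R]_(m, dv)) (x : X) (l : R) : R :=
  (n * dv)%:R^-1 * frob2 (Rlam S V l x - Rlam S V 1 x).

Definition Dbar (R : realType) d (X : measurableType d) (P : probability X R)
  (n m dv : nat) (S : X -> 'M[R]_(n, m)) (V : X -> 'M[R]_(m, dv)) (l : R) : \bar R :=
  (\int[P]_x (Dshift S V x l)%:E)%E.

Definition dR1 (R : realType) (X : Type) (n m dv : nat)
  (S : X -> 'M[R]_(n, m)) (V : X -> 'M[R]_(m, dv)) (x : X) (l : R) : 'M[R]_(n, dv) :=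
  \matrix_(i < n, j < dv) derive1 (fun t => Rlam S V t x i j) l.
Definition dR2 (R : realType) (X : Type) (n m dv : nat)
  (S : X -> 'M[R]_(n, m)) (V : X -> 'M[R]_(m, dv)) (x : X) (l : R) : 'M[R]_(n, dv) :=
  \matrix_(i < n, j < dv) derive1 (fun t => derive1 (fun s => Rlam S V s x i j) t) l.

(* Main.v *)
Require Import Defs.
From HB Require Import structures.
From mathcomp Require Import all_boot all_order all_algebra.
From mathcomp Require Import all_classical all_reals all_analysis.
From mathcomp Require Import measurable_realfun.
From mathcomp Require Import ring lra.
Import Order.TTheory GRing.Theory Num.Theory.
Import numFieldNormedType.Exports.
Local Open Scope ring_scope.

Set Implicit Arguments. Unset Strict Implicit. Unset Printing Implicit Defensive.

Section real_lemmas.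
Variable R : realType.

Lemma der_cont (f : R -> R) : (forall x, derivable f x 1) -> continuous f.
Proof.
move=> df x; apply: differentiable_continuous; exact/derivable1_diffP.
Qed.

Lemma lip (f : R -> R) (u v K : R) : (forall x, derivable f x 1) ->
  (forall x, (u <= x <= v) || (v <= x <= u) -> `|derive1 f x| <= K) ->
  `|f u - f v| <= K * `|u - v|.
Proof.
move=> df.
wlog uv : u v / u <= v.
  move=> H hK; case: (leP u v) => [uv|vu]; first exact: H.
  rewrite distrC [`|u - v|]distrC; apply: H; first exact: ltW.
  by move=> x hx; apply: hK; rewrite orbC.
move=> hK.
have [c cuv Hc] : exists2 c, c \in `[u, v]%R & f v - f u = derive1 f c * (v - u).
  apply: MVT_segment => //.
    move=> x _; rewrite derive1E; exact: derivableP.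
  apply: continuous_subspaceT; exact: der_cont.
rewrite distrC Hc distrC normrM (ger0_norm (_ : 0 <= v - u)) ?subr_ge0 //.
apply: ler_wpM2r; first by rewrite subr_ge0.
apply: hK; move: cuv; rewrite in_itv /= => /andP[h1 h2].
by rewrite h1 h2.
Qed.

End real_lemmas.

Section S.
Variable R : realType.
Lemma is_derive_lin (c x : R) : is_derive x 1 (fun s : R => c * s) c.
Proof.
have := @is_deriveZ R R R id c x 1 1 (is_derive_id _ _).
by rewrite /GRing.scale /= mulr1.
Qed.

Lemma is_derive_linr (c x : R) : is_derive x 1 (fun s : R => s * c) c.
Proof.
have -> : (fun s : R => s * c) = (fun s => c * s) by apply/funext => s; rewrite mulrC.
exact: is_derive_lin.
Qed.

Definition btw (a b x : R) := (a <= x <= b) || (b <= x <= a).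

Lemma btwE (l x : R) : btw l 1 x <-> (l <= x /\ x <= 1) \/ (1 <= x /\ x <= l).
Proof.
rewrite /btw; split.
  by case/orP => /andP[a b]; [left|right].
by case=> -[a b]; apply/orP; [left|right]; apply/andP.
Qed.

Lemma btw_trans (l x y : R) : btw l 1 x -> btw x 1 y -> btw l 1 y.
Proof.
move=> /btwE h1 /btwE h2; apply/btwE; case: h1 => -[a b]; case: h2 => -[c e].
- by left; split; lra.
- have xe : x = 1 by lra.
  have ye : y = 1 by lra.
  by left; split; lra.
- have xe : x = 1 by lra.
  have ye : y = 1 by lra.
  by right; split; lra.
- by right; split; lra.
Qed.

Lemma btw_norm (l x : R) : btw l 1 x -> `|x - 1| <= `|l - 1|.
Proof.
move=> /btwE [] [a b].
  rewrite (ler0_norm (_ : x - 1 <= 0)) ?subr_le0 // (ler0_norm (_ : l - 1 <= 0)); lra.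
rewrite (ger0_norm (_ : 0 <= x - 1)) ?subr_ge0 // (ger0_norm (_ : 0 <= l - 1)); lra.
Qed.

Lemma btw_1 (l : R) : btw l 1 1.
Proof. by apply/btwE; case: (leP l 1) => h; [left|right]; split => //; apply: ltW. Qed.

Lemma btw_sym (l x : R) : btw l 1 x -> btw x 1 1.
Proof. by move=> _; apply: btw_1. Qed.

Lemma taylor (f : R -> R) (dl M2 l : R) : (forall x, derivable f x 1) ->
  (forall x, derivable (derive1 f) x 1) ->
  (forall s, 1 - dl < s < 1 + dl -> `|derive1 (derive1 f) s| <= M2) ->
  `|l - 1| < dl ->
  `|f l - f 1 - derive1 f 1 * (l - 1)| <= M2 * (l - 1) ^+ 2.
Proof.
move=> df ddf hM hl.
set c := derive1 f 1.
pose h s := f s - c * s.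
have dh (x : R) : is_derive x 1 h (derive1 f x - c).
  apply: is_deriveB; last exact: is_derive_lin.
  rewrite derive1E; exact: derivableP.
have inI (x : R) : btw l 1 x -> 1 - dl < x < 1 + dl.
  move=> /btw_norm hx; have : `|x - 1| < dl by apply: le_lt_trans hl.
  rewrite ltr_norml => /andP[a b]; apply/andP; split; lra.
have -> : f l - f 1 - c * (l - 1) = h l - h 1 by rewrite /h; ring.
have := @lip R h l 1 (M2 * `|l - 1|).
rewrite -mulrA -normrM -expr2 ger0_norm ?sqr_ge0 //; apply.
  by move=> x; case: (dh x).
move=> x hx; rewrite derive1E; case: (dh x) => _ ->.
apply: (le_trans (@lip R (derive1 f) x 1 M2 _ _)) => //.
  move=> y hy; apply: hM; apply: inI; exact: (btw_trans hx hy).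
apply: ler_wpM2l.
  apply: le_trans (hM 1 _) => //; apply: inI; exact: btw_1.
exact: btw_norm.
Qed.

End S.

Section S.
Variable R : realType.
Definition smooth1 (h : R -> R) := forall l : R, derivable h l 1.
Lemma smoothD f g : smooth1 f -> smooth1 g -> smooth1 (fun l => f l + g l).
Proof. move=> hf hg l. have := derivableD (hf l) (hg l). exact. Qed.
Lemma smoothM f g : smooth1 f -> smooth1 g -> smooth1 (fun l => f l * g l).
Proof. move=> hf hg l. have := derivableM (hf l) (hg l). exact. Qed.
Lemma smoothN f : smooth1 f -> smooth1 (fun l => - f l).
Proof. move=> hf l. have := derivableN (hf l). exact. Qed.
Lemma smoothV f : smooth1 f -> (forall l, f l != 0) -> smooth1 (fun l => (f l)^-1).
Proof. move=> hf hn l. have := derivableV (hn l) (hf l). exact. Qed.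
Variable n : nat.
Definition E (c a : 'I_n -> R) (l : R) := \sum_(k < n) c k * expR (l * a k).

Lemma is_derive_E c a (l : R) : is_derive l 1 (E c a) (E (fun k => c k * a k) a l).
Proof.
have -> : E c a = \sum_(k < n) (fun l => c k * expR (l * a k)).
  by rewrite fct_sumE; apply/funext => x.
rewrite /E; apply: is_derive_sum => k.
have h0 : is_derive l 1 (fun s : R => s * a k) (a k).
  have := @is_deriveZ R R R id (a k) l 1 1 (is_derive_id _ _).
  rewrite [X in is_derive _ _ _ X]/GRing.scale /= mulr1 => H.
  have -> : (fun s : R => s * a k) = (a k \*: id) by apply/funext => s /=; rewrite mulrC.
  exact: H.
have h1 : is_derive l 1 (expR \o (fun s => s * a k)) (expR (l * a k) * a k).
  exact: is_derive1_comp.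
have := @is_deriveZ R R R _ (c k) l 1 _ h1 => H.
have -> : (fun s : R => c k * expR (s * a k)) = (c k \*: (expR \o (fun s : R => s * a k))) by apply/funext.
apply: is_derive_eq H _.
change (c k * (expR (l * a k) * a k) = c k * a k * expR (l * a k)); ring.
Qed.

Lemma smoothE c a : smooth1 (E c a).
Proof. by move=> l; case: (is_derive_E c a l). Qed.
Definition Z a := E (fun _ => 1) a.
Definition fr c a (l : R) := E c a l * (Z a l)^-1.
Definition d1 c a (l : R) := E c a l * (- (Z a l * Z a l)^-1 * E (fun k => 1 * a k) a l)
   + (Z a l)^-1 * E (fun k => c k * a k) a l.

Lemma Z_gt0 (hn : (0 < n)%N) (a : 'I_n -> R) (l : R) : 0 < Z a l.
Proof.
rewrite /Z /E (bigD1 (Ordinal hn)) //= mul1r.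
have h1 := expR_gt0 (l * a (Ordinal hn)).
have h2 : 0 <= \sum_(i < n | i != Ordinal hn) 1 * expR (l * a i).
  by apply: sumr_ge0 => i _; rewrite mul1r; apply: ltW; apply: expR_gt0.
lra.
Qed.

Lemma is_derive_fr (hn : (0 < n)%N) (c a : 'I_n -> R) (l : R) : is_derive l 1 (fr c a) (d1 c a l).
Proof.
have zn : Z a l != 0 by apply: lt0r_neq0; apply: Z_gt0.
have H := is_deriveM (is_derive_E c a l) (is_deriveV zn (is_derive_E (fun _ => 1) a l)).
have -> : fr c a = (E c a * (fun y => (Z a y)^-1)) by apply/funext.
apply: is_derive_eq H _.
rewrite /d1 -expr2.
change (E c a l * (- (Z a l ^+ 2)^-1 * E (fun k => 1 * a k) a l) + (Z a l)^-1 * E (fun k => c k * a k) a l =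
  E c a l * (- (Z a l ^+ 2)^-1 * E (fun k => 1 * a k) a l) + (Z a l)^-1 * E (fun k => c k * a k) a l).
done.
Qed.

Lemma derive1_fr (hn : (0 < n)%N) (c a : 'I_n -> R) : derive1 (fr c a) = d1 c a.
Proof.
by apply/funext => l; rewrite derive1E; case: (is_derive_fr hn c a l).
Qed.

Lemma smooth_fr (hn : (0 < n)%N) (c a : 'I_n -> R) : smooth1 (fr c a).
Proof. by move=> l; case: (is_derive_fr hn c a l). Qed.

Lemma smooth_d1 (hn : (0 < n)%N) (c a : 'I_n -> R) : smooth1 (d1 c a).
Proof.
have zn (l : R) : Z a l != 0 by apply: lt0r_neq0; apply: Z_gt0.
pose z := Z a. pose e1 := E (fun k => 1 * a k) a. pose e0 := E c a.
pose e2 := E (fun k => c k * a k) a.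
have sz : smooth1 z by apply: smoothE.
have s1 : smooth1 e1 by apply: smoothE.
have s0 : smooth1 e0 by apply: smoothE.
have s2 : smooth1 e2 by apply: smoothE.
have szz : smooth1 (fun l => z l * z l) by apply: (smoothM sz sz).
have szzV : smooth1 (fun l => (z l * z l)^-1).
  by apply: (smoothV szz) => l; rewrite mulf_neq0.
have sA : smooth1 (fun l => - (z l * z l)^-1) by apply: (smoothN szzV).
have sB : smooth1 (fun l => - (z l * z l)^-1 * e1 l) by apply: (smoothM sA s1).
have sC : smooth1 (fun l => e0 l * (- (z l * z l)^-1 * e1 l)) by apply: (smoothM s0 sB).
have szV : smooth1 (fun l => (z l)^-1) by apply: (smoothV sz zn).
have sD : smooth1 (fun l => (z l)^-1 * e2 l) by apply: (smoothM szV s2).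
exact: (smoothD sC sD).
Qed.
End S.


Section M.
Variables (R : realType) (d : measure_display) (X : measurableType d).

Lemma mE n (c a : X -> 'I_n -> R) (l : R) :
  (forall k, measurable_fun setT (fun x => c x k)) ->
  (forall k, measurable_fun setT (fun x => a x k)) ->
  measurable_fun setT (fun x => E (c x) (a x) l).
Proof.
move=> hc ha; rewrite /E.
apply: measurable_sum => k.
have h1 : measurable_fun setT (fun x => l * a x k).
  have := measurable_realfun.measurable_funM (measurable_cst l) (ha k); exact.
have h2 : measurable_fun setT (fun x => expR (l * a x k)).
  exact: (measurableT_comp (@measurable_realfun.measurable_expR R) h1).
have := measurable_realfun.measurable_funM (hc k) h2; exact.
Qed.

Lemma mV (g : X -> R) : (forall x, 0 < g x) -> measurable_fun setT g ->
  measurable_fun setT (fun x => (g x)^-1).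
Proof.
move=> gp mg.
have -> : (fun x => (g x)^-1) = (fun x => expR (- ln (g x))).
  apply/funext => x; rewrite expRN lnK //; rewrite posrE; exact: gp.
apply: (measurableT_comp (@measurable_realfun.measurable_expR R)).
apply: measurableT_comp => //.
exact: (measurableT_comp (@measurable_realfun.measurable_ln R) mg).
Qed.

Lemma mfr n (c a : X -> 'I_n -> R) (l : R) :
  (forall k, measurable_fun setT (fun x => c x k)) ->
  (forall k, measurable_fun setT (fun x => a x k)) ->
  measurable_fun setT (fun x => fr (c x) (a x) l).
Proof.
move=> hc ha; case: n c a hc ha => [|n'] c a hc ha.
  have -> : (fun x => fr (c x) (a x) l) = (fun _ => 0).
    by apply/funext => x; rewrite /fr /E big_ord0 mul0r.
  exact: measurable_cst.
have h1 := mE l hc ha.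
have h2 : measurable_fun setT (fun x => (Z (a x) l)^-1).
  apply: mV; first by move=> x; apply: Z_gt0.
  by apply: mE => // k; exact: measurable_cst.
have := measurable_realfun.measurable_funM h1 h2; exact.
Qed.

Lemma md1 n (c a : X -> 'I_n -> R) (l : R) : (0 < n)%N ->
  (forall k, measurable_fun setT (fun x => c x k)) ->
  (forall k, measurable_fun setT (fun x => a x k)) ->
  measurable_fun setT (fun x => d1 (c x) (a x) l).
Proof.
move=> hn hc ha.
have one : forall k : 'I_n, measurable_fun setT (fun x : X => (1 : R)).
  by move=> k; exact: measurable_cst.
have hz := mE l one ha.
have hzp : forall x, 0 < Z (a x) l by move=> x; apply: Z_gt0.
have h1a : forall k, measurable_fun setT (fun x => 1 * a x k).
  move=> k; have := measurable_realfun.measurable_funM (measurable_cst (1 : R)) (ha k); exact.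
have hca : forall k, measurable_fun setT (fun x => c x k * a x k).
  move=> k; have := measurable_realfun.measurable_funM (hc k) (ha k); exact.
have e1 := mE l h1a ha.
have e0 := mE l hc ha.
have e2 := mE l hca ha.
have zz : measurable_fun setT (fun x => Z (a x) l * Z (a x) l).
  have := measurable_realfun.measurable_funM hz hz; exact.
have zzV : measurable_fun setT (fun x => (Z (a x) l * Z (a x) l)^-1).
  by apply: mV => // x; apply: mulr_gt0.
have zV : measurable_fun setT (fun x => (Z (a x) l)^-1) by apply: mV.
have A : measurable_fun setT (fun x => - (Z (a x) l * Z (a x) l)^-1).
  have := measurable_realfun.measurable_funN zzV; exact.
have B : measurable_fun setT (fun x => - (Z (a x) l * Z (a x) l)^-1 * E (fun k => 1 * a x k) (a x) l).
  have := measurable_realfun.measurable_funM A e1; exact.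
have C : measurable_fun setT (fun x => E (c x) (a x) l * (- (Z (a x) l * Z (a x) l)^-1 * E (fun k => 1 * a x k) (a x) l)).
  have := measurable_realfun.measurable_funM e0 B; exact.
have D : measurable_fun setT (fun x => (Z (a x) l)^-1 * E (fun k => c x k * a x k) (a x) l).
  have := measurable_realfun.measurable_funM zV e2; exact.
rewrite /d1.
have := measurable_realfun.measurable_funD C D; exact.
Qed.

Lemma Rlam_fr n m dv (S : X -> 'M[R]_(n, m)) (V : X -> 'M[R]_(m, dv)) l x i j :
  Rlam S V l x i j = fr (fun k => V x k j) (fun k => S x i k) l.
Proof.
rewrite /Rlam /softmax /fr /Z /E !mxE mulr_suml.
apply: eq_bigr => k _; rewrite !mxE.
have -> : \sum_(k0 < m) expR ((l *: S x) i k0) = \sum_(k0 < m) 1 * expR (l * S x i k0).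
  by apply: eq_bigr => k' _; rewrite mxE mul1r.
by rewrite mulrAC [X in X / _]mulrC.
Qed.

Lemma fr0 (c a : 'I_0 -> R) : fr c a = (fun _ => 0).
Proof. by apply/funext => t; rewrite /fr /E big_ord0 mul0r. Qed.

Lemma Rlam_smooth n m dv (S : X -> 'M[R]_(n, m)) (V : X -> 'M[R]_(m, dv)) x i j :
  smooth1 (fun t => Rlam S V t x i j) /\ smooth1 (derive1 (fun t => Rlam S V t x i j)).
Proof.
have -> : (fun t => Rlam S V t x i j) = fr (fun k => V x k j) (fun k => S x i k).
  by apply/funext => t; apply: Rlam_fr.
case: m S V => [|m'] S V.
  rewrite fr0.
  have -> : derive1 (fun _ : R => 0 : R) = (fun _ => 0).
    by apply/funext => t; apply: derive1_cst.
  by split => t; exact: derivable_cst.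
split; first exact: smooth_fr.
rewrite derive1_fr //; exact: smooth_d1.
Qed.

Lemma mRlam n m dv (S : X -> 'M[R]_(n, m)) (V : X -> 'M[R]_(m, dv))
  (HS : forall i j, measurable_fun setT (fun x => S x i j))
  (HV : forall i j, measurable_fun setT (fun x => V x i j)) l i j :
  measurable_fun setT (fun x => Rlam S V l x i j).
Proof.
have -> : (fun x => Rlam S V l x i j) = (fun x => fr (fun k => V x k j) (fun k => S x i k) l).
  by apply/funext => x; apply: Rlam_fr.
by apply: mfr => k.
Qed.

Lemma mdR n m dv (S : X -> 'M[R]_(n, m)) (V : X -> 'M[R]_(m, dv))
  (HS : forall i j, measurable_fun setT (fun x => S x i j))
  (HV : forall i j, measurable_fun setT (fun x => V x i j)) i j :
  measurable_fun setT (fun x => derive1 (fun t => Rlam S V t x i j) 1).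
Proof.
have -> : (fun x => derive1 (fun t => Rlam S V t x i j) 1) =
    (fun x => derive1 (fr (fun k => V x k j) (fun k => S x i k)) 1).
  apply/funext => x; congr (derive1 _ 1); apply/funext => t; exact: Rlam_fr.
case: m S V HS HV => [|m'] S V HS HV.
  have -> : (fun x => derive1 (fr (fun k => V x k j) (fun k => S x i k)) 1) = (fun _ => 0).
    by apply/funext => x; rewrite fr0; apply: derive1_cst.
  exact: measurable_cst.
have -> : (fun x => derive1 (fr (fun k => V x k j) (fun k => S x i k)) 1) =
   (fun x => d1 (fun k => V x k j) (fun k => S x i k) 1).
  by apply/funext => x; rewrite derive1_fr.
by apply: md1 => // k.
Qed.

End M.



Section PW.
Variables (R : realType).

Lemma frob2_ge0 p q (A : 'M[R]_(p, q)) : 0 <= frob2 A.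
Proof. by apply: sumr_ge0 => i _; apply: sumr_ge0 => j _; apply: sqr_ge0. Qed.

Lemma frob_ge0 p q (A : 'M[R]_(p, q)) : 0 <= frob A.
Proof. exact: sqrtr_ge0. Qed.

Lemma entry_le p q (A : 'M[R]_(p, q)) i j : `|A i j| <= frob A.
Proof.
rewrite /frob -sqrtr_sqr; apply: ler_wsqrtr.
rewrite /frob2 (bigD1 i) //= (bigD1 j) //=.
have h1 : 0 <= \sum_(j' < q | j' != j) A i j' ^+ 2.
  by apply: sumr_ge0 => *; apply: sqr_ge0.
have h2 : 0 <= \sum_(i' < p | i' != i) \sum_(j' < q) A i' j' ^+ 2.
  by apply: sumr_ge0 => *; apply: sumr_ge0 => *; apply: sqr_ge0.
lra.
Qed.

Lemma frob2_le p q (A : 'M[R]_(p, q)) M : frob A <= M -> frob2 A <= M ^+ 2.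
Proof.
move=> h; have h0 := frob_ge0 A.
rewrite -(sqr_sqrtr (frob2_ge0 A)) -/(frob A).
by rewrite !expr2; apply: ler_pM.
Qed.

Lemma inv_nat_le1 k : ((k%:R : R)^-1 <= 1).
Proof.
case: k => [|k]; first by rewrite invr0 ler01.
by rewrite invf_le1 ?ler1n // ltr0n.
Qed.

Lemma inv_nat_ge0 k : (0 <= (k%:R : R)^-1).
Proof. by rewrite invr_ge0 ler0n. Qed.

Lemma inv_nat_mul k (c : R) : 0 <= c -> (k%:R : R)^-1 * (c *+ k) <= c.
Proof.
move=> c0; case: k => [|k]; first by rewrite invr0 mul0r.
by rewrite -[c *+ _]mulr_natl mulrA mulVf ?mul1r // pnatr_eq0.
Qed.

Lemma alg (a b t M1 M2 : R) : 0 <= t -> t <= 1 -> 0 <= M1 -> 0 <= M2 ->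
  `|a - b| <= M2 * t ^+ 2 -> `|b| <= M1 * t ->
  `|a ^+ 2 - b ^+ 2| <= 2 * (M1 ^+ 2 + M2 ^+ 2) * t ^+ 3.
Proof.
move=> t0 t1 m1 m2 hu hw.
have -> : a ^+ 2 - b ^+ 2 = (a - b) * (a + b) by ring.
rewrite normrM.
have hab : `|a + b| <= `|a - b| + 2 * `|b|.
  have -> : a + b = (a - b) + 2 * b by ring.
  apply: le_trans (ler_normD _ _) _.
  by rewrite normrM (ger0_norm (_ : (0:R) <= 2)).
have u0 := normr_ge0 (a - b).
have w0 := normr_ge0 b.
have s1 : `|a - b| * `|a + b| <= `|a - b| * (`|a - b| + 2 * `|b|).
  exact: ler_wpM2l.
have s2 : `|a - b| * (`|a - b| + 2 * `|b|) <= (M2 * t ^+ 2) * (M2 * t ^+ 2 + 2 * (M1 * t)).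
  apply: ler_pM; [exact: u0| lra | exact: hu | lra].
have t3 : 0 <= t ^+ 3 by apply: exprn_ge0.
have h1 : M2 ^+ 2 * t ^+ 4 <= M2 ^+ 2 * t ^+ 3.
  apply: ler_wpM2l; first exact: sqr_ge0.
  rewrite (exprS t 3) -[X in _ <= X]mul1r; apply: ler_wpM2r => //.
have h2 : 2 * M1 * M2 * t ^+ 3 <= (M1 ^+ 2 + M2 ^+ 2) * t ^+ 3.
  apply: ler_wpM2r => //.
  have := sqr_ge0 (M1 - M2); lra.
have e : (M2 * t ^+ 2) * (M2 * t ^+ 2 + 2 * (M1 * t)) = M2 ^+ 2 * t ^+ 4 + 2 * M1 * M2 * t ^+ 3 by ring.
rewrite e in s2.
have h3 : 0 <= M2 ^+ 2 * t ^+ 3 by apply: mulr_ge0 => //; apply: sqr_ge0.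
have h4 : 0 <= M1 ^+ 2 * t ^+ 3 by apply: mulr_ge0 => //; apply: sqr_ge0.
have e2 : 2 * (M1 ^+ 2 + M2 ^+ 2) * t ^+ 3 = 2 * (M1 ^+ 2 * t ^+ 3) + 2 * (M2 ^+ 2 * t ^+ 3) by ring.
have e3 : (M1 ^+ 2 + M2 ^+ 2) * t ^+ 3 = M1 ^+ 2 * t ^+ 3 + M2 ^+ 2 * t ^+ 3 by ring.
rewrite e2; rewrite e3 in h2.
lra.
Qed.

Lemma pw d (X : measurableType d) n m dv (S : X -> 'M[R]_(n, m)) (V : X -> 'M[R]_(m, dv))
  x (dl M1x M2x : R) (hd : 0 < dl)
  (Hx : forall l, 1 - dl < l < 1 + dl -> frob (dR1 S V x l) <= M1x /\ frob (dR2 S V x l) <= M2x)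
  (l : R) : `|l - 1| < dl -> `|l - 1| <= 1 ->
  `|Dshift S V x l - ((n * dv)%:R^-1 * frob2 (dR1 S V x 1)) * (l - 1) ^+ 2|
     <= 2 * (M1x ^+ 2 + M2x ^+ 2) * `|l - 1| ^+ 3.
Proof.
move=> hl hl1.
have in1 : 1 - dl < 1 < 1 + dl by apply/andP; split; lra.
have [F1 F2] := Hx 1 in1.
have m1 : 0 <= M1x := le_trans (frob_ge0 _) F1.
have m2 : 0 <= M2x := le_trans (frob_ge0 _) F2.
set t := `|l - 1|.
have t0 : 0 <= t by apply: normr_ge0.
have tt : (l - 1) ^+ 2 = t ^+ 2 by rewrite /t -normrX ger0_norm // sqr_ge0.
set K := 2 * (M1x ^+ 2 + M2x ^+ 2).
have K0 : 0 <= K * t ^+ 3.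
  by apply: mulr_ge0; [apply: mulr_ge0 => //; apply: addr_ge0; apply: sqr_ge0 | apply: exprn_ge0].
have key i j : `|(Rlam S V l x - Rlam S V 1 x) i j ^+ 2 - (dR1 S V x 1 i j * (l - 1)) ^+ 2|
    <= K * t ^+ 3.
  have e1 : `|derive1 (fun t => Rlam S V t x i j) 1| <= M1x.
    by have := entry_le (dR1 S V x 1) i j; rewrite mxE => h; apply: le_trans h F1.
  rewrite [(Rlam S V l x - Rlam S V 1 x) i j]mxE [(- Rlam S V 1 x) i j]mxE [dR1 S V x 1 i j]mxE.
  have [s1 s2] := Rlam_smooth S V x i j.
  apply: alg => //.
    have h2 : forall s, 1 - dl < s < 1 + dl ->
        `|derive1 (derive1 (fun t => Rlam S V t x i j)) s| <= M2x.
      move=> s hs; have [_ h] := Hx s hs; apply: le_trans h.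
      by have := entry_le (dR2 S V x s) i j; rewrite mxE.
    by have := taylor s1 s2 h2 hl; rewrite tt.
  by rewrite normrM; apply: ler_wpM2r.
have E : frob2 (dR1 S V x 1) * (l - 1) ^+ 2 = \sum_(i < n) \sum_(j < dv) (dR1 S V x 1 i j * (l - 1)) ^+ 2.
  rewrite /frob2 mulr_suml; apply: eq_bigr => i _; rewrite mulr_suml.
  by apply: eq_bigr => j _; rewrite exprMn.
rewrite /Dshift -mulrA E -mulrBr /frob2 -sumrB.
under eq_bigr do rewrite -sumrB.
rewrite normrM ger0_norm ?inv_nat_ge0 //.
have B : `|\sum_(i < n) \sum_(j < dv) ((Rlam S V l x - Rlam S V 1 x) i j ^+ 2 - (dR1 S V x 1 i j * (l - 1)) ^+ 2)|
    <= (K * t ^+ 3) *+ dv *+ n.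
  apply: le_trans (ler_norm_sum _ _ _) _.
  apply: (@le_trans _ _ (\sum_(i < n) ((K * t ^+ 3) *+ dv))); last by rewrite sumr_const card_ord.
  apply: ler_sum => i _.
  apply: le_trans (ler_norm_sum _ _ _) _.
  apply: (@le_trans _ _ (\sum_(j < dv) (K * t ^+ 3))); last by rewrite sumr_const card_ord.
  by apply: ler_sum => j _; apply: key.
apply: le_trans (ler_wpM2l (inv_nat_ge0 _) B) _.
by rewrite -mulrnA mulnC; apply: inv_nat_mul.
Qed.

End PW.


Section OC.
Variables (R : realType) (d : measure_display) (X : measurableType d).
Variables (n m dv : nat) (S : X -> 'M[R]_(n, m)) (V : X -> 'M[R]_(m, dv)).
Hypothesis HS : forall i j, measurable_fun setT (fun x => S x i j).
Hypothesis HV : forall i j, measurable_fun setT (fun x => V x i j).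

Lemma mfrob2 p q (A : X -> 'M[R]_(p, q)) :
  (forall i j, measurable_fun setT (fun x => A x i j)) ->
  measurable_fun setT (fun x => frob2 (A x)).
Proof.
move=> hA; rewrite /frob2.
apply: measurable_sum => i; apply: measurable_sum => j.
exact: measurable_realfun.measurable_funX.
Qed.

Lemma mD (l : R) : measurable_fun setT (fun x => Dshift S V x l).
Proof.
rewrite /Dshift.
have h : measurable_fun setT (fun x => frob2 (Rlam S V l x - Rlam S V 1 x)).
  apply: mfrob2 => i j.
  have -> : (fun x => (Rlam S V l x - Rlam S V 1 x) i j) = (fun x => Rlam S V l x i j - Rlam S V 1 x i j).
    by apply/funext => x; rewrite [(Rlam S V l x - Rlam S V 1 x) i j]mxE [(- Rlam S V 1 x) i j]mxE.
  have := measurable_realfun.measurable_funB (mRlam HS HV l i j) (mRlam HS HV 1 i j); exact.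
have := measurable_realfun.measurable_funM (measurable_cst ((n * dv)%:R^-1 : R)) h; exact.
Qed.

Definition Gm x := (n * dv)%:R^-1 * frob2 (dR1 S V x 1).

Lemma mG : measurable_fun setT Gm.
Proof.
rewrite /Gm.
have h : measurable_fun setT (fun x => frob2 (dR1 S V x 1)).
  apply: mfrob2 => i j.
  have -> : (fun x => dR1 S V x 1 i j) = (fun x => derive1 (fun t => Rlam S V t x i j) 1).
    by apply/funext => x; rewrite mxE.
  exact: mdR.
have := measurable_realfun.measurable_funM (measurable_cst ((n * dv)%:R^-1 : R)) h; exact.
Qed.

Lemma D_ge0 x l : 0 <= Dshift S V x l.
Proof. by apply: mulr_ge0; [apply: inv_nat_ge0 | apply: frob2_ge0]. Qed.

Lemma G_ge0 x : 0 <= Gm x.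
Proof. by apply: mulr_ge0; [apply: inv_nat_ge0 | apply: frob2_ge0]. Qed.

Lemma G_le x M : frob (dR1 S V x 1) <= M -> Gm x <= M ^+ 2.
Proof.
move=> h; rewrite /Gm.
have := frob2_le h; have := frob2_ge0 (dR1 S V x 1); have := @inv_nat_le1 R (n * dv);
have := @inv_nat_ge0 R (n * dv) => a b c e.
apply: le_trans (_ : 1 * M ^+ 2 <= _); last by rewrite mul1r.
by apply: ler_pM.
Qed.

End OC.


Section OC2.
Variables (R : realType) (d : measure_display) (X : measurableType d).
Variables (n m dv : nat) (S : X -> 'M[R]_(n, m)) (V : X -> 'M[R]_(m, dv)).
Hypothesis HS : forall i j, measurable_fun setT (fun x => S x i j).
Hypothesis HV : forall i j, measurable_fun setT (fun x => V x i j).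
Variables (P : probability X R) (dl : R) (hd : 0 < dl) (M1 M2 : X -> R).
Hypotheses (HM1m : measurable_fun setT M1) (HM2m : measurable_fun setT M2).
Hypotheses (HM1p : forall x, 0 <= M1 x) (HM2p : forall x, 0 <= M2 x).
Hypothesis Hae : {ae P, forall x, forall l, 1 - dl < l < 1 + dl ->
            frob (dR1 S V x l) <= M1 x /\ frob (dR2 S V x l) <= M2 x}.
Hypothesis I : (\int[P]_x ((M1 x ^+ 2 + M2 x ^+ 2)%:E) < +oo)%E.

Let K x := 2 * (M1 x ^+ 2 + M2 x ^+ 2).

Let mK : measurable_fun setT K.
Proof.
have h1 := measurable_realfun.measurable_funX 2 HM1m.
have h2 := measurable_realfun.measurable_funX 2 HM2m.
have h3 : measurable_fun setT (fun x => M1 x ^+ 2 + M2 x ^+ 2).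
  have := measurable_realfun.measurable_funD h1 h2; exact.
have := measurable_realfun.measurable_funM (measurable_cst (2 : R)) h3; exact.
Qed.

Let K0 x : 0 <= K x.
Proof. by apply: mulr_ge0 => //; apply: addr_ge0; apply: sqr_ge0. Qed.

Let mE (f : X -> R) : measurable_fun setT f -> measurable_fun setT (EFin \o f).
Proof. by move=> h; apply/measurable_EFinP. Qed.

Let CK_fin : (\int[P]_x (K x)%:E)%E \is a fin_num.
Proof.
have e : (\int[P]_x (K x)%:E = 2%:E * \int[P]_x ((M1 x ^+ 2 + M2 x ^+ 2)%:E))%E.
  rewrite /K; under eq_integral do rewrite EFinM.
  apply: ge0_integralZl_EFin => //.
    by move=> x _; rewrite lee_fin; apply: addr_ge0; apply: sqr_ge0.
  apply: mE.
  have h1 := measurable_realfun.measurable_funX 2 HM1m.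
  have h2 := measurable_realfun.measurable_funX 2 HM2m.
  have := measurable_realfun.measurable_funD h1 h2; exact.
rewrite ge0_fin_numE; last by apply: integral_ge0 => x _; rewrite lee_fin.
rewrite e; apply: lte_mul_pinfty => //.
Qed.

Let IZ (f : X -> R) (c : R) : measurable_fun setT f -> (forall x, 0 <= f x) -> 0 <= c ->
  (\int[P]_x (f x * c)%:E = (\int[P]_x (f x)%:E) * c%:E)%E.
Proof.
move=> mf f0 c0; under eq_integral do rewrite EFinM.
apply: (ge0_integralZr P measurableT (mE mf)); first by move=> x _; rewrite lee_fin.
by rewrite lee_fin.
Qed.

Let ID (f g : X -> R) : measurable_fun setT f -> (forall x, 0 <= f x) ->
  measurable_fun setT g -> (forall x, 0 <= g x) ->
  (\int[P]_x (f x + g x)%:E = \int[P]_x (f x)%:E + \int[P]_x (g x)%:E)%E.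
Proof.
move=> mf f0 mg g0; under eq_integral do rewrite EFinD.
apply: ge0_integralD => //; by [move=> x _; rewrite lee_fin | apply: mE].
Qed.

Let mMc (f : X -> R) (c : R) : measurable_fun setT f -> measurable_fun setT (fun x => f x * c).
Proof. move=> mf; have := measurable_funM mf (measurable_cst c); exact. Qed.

Let BG_fin : (\int[P]_x (Gm S V x)%:E)%E \is a fin_num.
Proof.
have G0 : (0 <= \int[P]_x (Gm S V x)%:E)%E.
  by apply: integral_ge0 => x _; rewrite lee_fin; apply: G_ge0.
rewrite ge0_fin_numE //.
apply: le_lt_trans (_ : _ <= \int[P]_x (K x)%:E)%E _; last first.
  by rewrite -ge0_fin_numE ?CK_fin //; apply: integral_ge0 => x _; rewrite lee_fin.
apply: ae_ge0_le_integral => //.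
- by move=> x _; rewrite lee_fin; apply: G_ge0.
- by apply: mE; apply: mG.
- by move=> x _; rewrite lee_fin.
- exact: mE.
apply: filterS Hae => x Hx _; rewrite lee_fin.
have in1 : 1 - dl < 1 < 1 + dl by have := hd; move=> h; apply/andP; split; lra.
have [F1 _] := Hx 1 in1.
apply: le_trans (G_le F1) _.
rewrite /K; have := sqr_ge0 (M2 x); have := sqr_ge0 (M1 x).
set a := M1 x ^+ 2; set b := M2 x ^+ 2; lra.
Qed.

Definition Cc := fine (\int[P]_x (K x)%:E)%E.
Definition Gc := fine (\int[P]_x (Gm S V x)%:E)%E.

Lemma bnd (l : R) : `|l - 1| < dl -> `|l - 1| <= 1 ->
  (`|Dbar P S V l - (Gc * (l - 1) ^+ 2)%:E| <= (Cc * `|l - 1| ^+ 3)%:E)%E.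
Proof.
move=> hl hl1.
set t := `|l - 1|. set s := (l - 1) ^+ 2.
have s0 : 0 <= s by apply: sqr_ge0.
have t3 : 0 <= t ^+ 3 by apply: exprn_ge0; apply: normr_ge0.
have pw2 : {ae P, forall x, setT x -> Dshift S V x l <= Gm S V x * s + K x * t ^+ 3 /\
                         Gm S V x * s <= Dshift S V x l + K x * t ^+ 3}.
  apply: filterS Hae => x Hx _.
  have := pw hd Hx hl hl1; rewrite -/(Gm S V x) -/s -/t -/(K x).
  set D0 := Dshift S V x l; set u := Gm S V x * s; set w := K x * t ^+ 3.
  by rewrite ler_norml => /andP[a b]; split; lra.
have IU : (\int[P]_x (Gm S V x * s + K x * t ^+ 3)%:E = (Gc * s + Cc * t ^+ 3)%:E)%E.
  rewrite ID; [|exact: mMc (mG HS HV) | by move=> x; apply: mulr_ge0 => //; apply: G_ge0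
     | exact: mMc mK | by move=> x; apply: mulr_ge0].
  rewrite IZ //; [|exact: mG | exact: G_ge0].
  rewrite IZ //.
  by rewrite -(fineK BG_fin) -(fineK CK_fin) -EFinM -EFinM -EFinD.
have IL : (\int[P]_x (Dshift S V x l + K x * t ^+ 3)%:E = Dbar P S V l + (Cc * t ^+ 3)%:E)%E.
  rewrite ID; [|exact: mD | by move=> x; apply: D_ge0 | exact: mMc mK | by move=> x; apply: mulr_ge0].
  by rewrite IZ // -(fineK CK_fin) -EFinM.
have up : (Dbar P S V l <= (Gc * s + Cc * t ^+ 3)%:E)%E.
  rewrite -IU; apply: ae_ge0_le_integral => //.
  - by move=> x _; rewrite lee_fin; apply: D_ge0.
  - by apply: mE; apply: mD.
  - by move=> x _; rewrite lee_fin; apply: addr_ge0; apply: mulr_ge0 => //; apply: G_ge0.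
  - apply: mE; have := measurable_funD (mMc s (mG HS HV)) (mMc (t ^+ 3) mK); exact.
  by apply: filterS pw2 => x hx Tx; rewrite lee_fin; case: (hx Tx).
have lo : ((Gc * s)%:E <= Dbar P S V l + (Cc * t ^+ 3)%:E)%E.
  rewrite -IL.
  have -> : (Gc * s)%:E = (\int[P]_x (Gm S V x * s)%:E)%E.
    by rewrite IZ //; [rewrite -(fineK BG_fin) -EFinM | exact: mG | exact: G_ge0].
  apply: ae_ge0_le_integral => //.
  - by move=> x _; rewrite lee_fin; apply: mulr_ge0 => //; apply: G_ge0.
  - by apply: mE; apply: mMc; apply: mG.
  - by move=> x _; rewrite lee_fin; apply: addr_ge0; [apply: D_ge0 | apply: mulr_ge0].
  - apply: mE; have := measurable_funD (mD HS HV l) (mMc (t ^+ 3) mK); exact.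
  by apply: filterS pw2 => x hx Tx; rewrite lee_fin; case: (hx Tx).
have A0 : (0 <= Dbar P S V l)%E.
  by apply: integral_ge0 => x _; rewrite lee_fin; apply: D_ge0.
have Afin : Dbar P S V l \is a fin_num.
  by rewrite ge0_fin_numE //; apply: le_lt_trans up _; apply: ltey.
rewrite -(fineK Afin) in up lo *.
rewrite -EFinD lee_fin in lo; rewrite lee_fin in up.
rewrite -EFinB abse_EFin lee_fin ler_norml; apply/andP; split; lra.
Qed.

Lemma one_class : exists G : R, forall e : R, 0 < e -> \forall l \near (1 : R),
   (`| Dbar P S V l - (G * (l - 1) ^+ 2)%:E | <= (e * (l - 1) ^+ 2)%:E)%E.
Proof.
exists Gc => e e0.
have hd' := hd.
have C0 : 0 <= Cc by apply: fine_ge0; apply: integral_ge0 => x _; rewrite lee_fin.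
have C1 : 0 < Cc + 1 by lra.
pose r := Num.min (Num.min dl 1) (e / (Cc + 1)).
have er : 0 < e / (Cc + 1) by apply: divr_gt0.
have r0 : 0 < r by rewrite /r !lt_min hd' ltr01 er.
apply/nbhs_ballP; exists r => // l; rewrite /ball /= => hl.
rewrite distrC in hl.
move: hl; rewrite /r !lt_min => /andP[/andP[h1 h2] h3].
apply: le_trans (bnd h1 (ltW h2)) _; rewrite lee_fin.
set t := `|l - 1|.
have t0 : 0 <= t by apply: normr_ge0.
have tt : (l - 1) ^+ 2 = t ^+ 2 by rewrite /t -normrX ger0_norm // sqr_ge0.
rewrite tt.
have h4 : t * (Cc + 1) < e by rewrite -ltr_pdivlMr.
have h5 : Cc * t <= e.
  have : t * (Cc + 1) = Cc * t + t by ring.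
  lra.
have -> : Cc * t ^+ 3 = (Cc * t) * t ^+ 2 by ring.
by apply: ler_wpM2r => //; apply: sqr_ge0.
Qed.

End OC2.

Unset Implicit Arguments. Set Strict Implicit. Set Printing Implicit Defensive.


Theorem theorem3p1 (R : realType) (d : measure_display) (X : measurableType d)
  (Pben Pbd : probability X R) (n m dv : nat)
  (S : X -> 'M[R]_(n, m)) (V : X -> 'M[R]_(m, dv))
  (HS : forall i j, measurable_fun setT (fun x => S x i j))
  (HV : forall i j, measurable_fun setT (fun x => V x i j))
  (delta : R) (Hdelta : 0 < delta) (M1 M2 : X -> R)
  (HM1m : measurable_fun setT M1) (HM2m : measurable_fun setT M2)
  (HM1p : forall x, 0 <= M1 x) (HM2p : forall x, 0 <= M2 x)
  (Hben : {ae Pben, forall x, forall l, 1 - delta < l < 1 + delta ->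
            frob (dR1 S V x l) <= M1 x /\ frob (dR2 S V x l) <= M2 x})
  (Hbd : {ae Pbd, forall x, forall l, 1 - delta < l < 1 + delta ->
            frob (dR1 S V x l) <= M1 x /\ frob (dR2 S V x l) <= M2 x})
  (Iben : (\int[Pben]_x ((M1 x ^+ 2 + M2 x ^+ 2)%:E) < +oo)%E)
  (Ibd : (\int[Pbd]_x ((M1 x ^+ 2 + M2 x ^+ 2)%:E) < +oo)%E) :
  exists Gben Gbd : R,
    (forall e : R, 0 < e -> \forall l \near (1 : R),
       (`| Dbar Pben S V l - (Gben * (l - 1) ^+ 2)%:E | <= (e * (l - 1) ^+ 2)%:E)%E) /\
    (forall e : R, 0 < e -> \forall l \near (1 : R),
       (`| Dbar Pbd S V l - (Gbd * (l - 1) ^+ 2)%:E | <= (e * (l - 1) ^+ 2)%:E)%E) /\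
    (Gben != Gbd -> exists2 eps : R, 0 < eps &
       forall l : R, 0 < `| l - 1 | < eps -> Dbar Pbd S V l != Dbar Pben S V l).
Proof.
have [Gben H1] := one_class HS HV Hdelta HM1m HM2m Hben Iben.
have [Gbd H2] := one_class HS HV Hdelta HM1m HM2m Hbd Ibd.
exists Gben, Gbd; split => //; split => // neq.
set e := `|Gben - Gbd| / 3.
have g0 : 0 < `|Gben - Gbd| by rewrite normr_gt0 subr_eq0.
have e0 : 0 < e by rewrite /e divr_gt0.
have [r1 r10 Hr1] := iffLR (nbhs_ballP _ _) (H1 e e0).
have [r2 r20 Hr2] := iffLR (nbhs_ballP _ _) (H2 e e0).
exists (Num.min r1 r2); first by rewrite lt_min r10 r20.
move=> l /andP[l0]; rewrite lt_min => /andP[lr1 lr2].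
apply/eqP => Heq.
have a : (`|Dbar Pben S V l - (Gben * (l - 1) ^+ 2)%:E| <= (e * (l - 1) ^+ 2)%:E)%E.
  by apply: Hr1; rewrite /ball /= distrC.
have b : (`|Dbar Pbd S V l - (Gbd * (l - 1) ^+ 2)%:E| <= (e * (l - 1) ^+ 2)%:E)%E.
  by apply: Hr2; rewrite /ball /= distrC.
rewrite Heq in b.
set s := (l - 1) ^+ 2.
have s0 : 0 < s.
  have -> : s = `|l - 1| ^+ 2 by rewrite /s -normrX ger0_norm // sqr_ge0.
  exact: exprn_gt0.
move: a b; rewrite -/s.
case: (Dbar Pben S V l) => [z||] //=.
move=> a b; rewrite lee_fin in a; rewrite lee_fin in b.
have c : `|Gben - Gbd| * s <= `|z - Gbd * s| + `|z - Gben * s|.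
  have -> : `|Gben - Gbd| * s = `|(z - Gbd * s) - (z - Gben * s)|.
    have -> : (z - Gbd * s) - (z - Gben * s) = (Gben - Gbd) * s by ring.
    by rewrite normrM (gtr0_norm s0).
  exact: ler_normB.
have p : 0 < e * s by apply: mulr_gt0.
have q : `|Gben - Gbd| * s = 3 * (e * s).
  by rewrite /e; field.
lra.
Qed.
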